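(* Let $\Gamma,\Delta$ be finite multisets of formulas and $\Sigma$ a finite multiset of outmost-boxed formulas. For every propositional variable $p$ and every agent symbol $a$ there exists a formula $A$ such that: (i) $\mathsf{V}(A)\subseteq\mathsf{V}(\Sigma\cup\Gamma\cup\Delta)\setminus\{p\}$ and $\mathsf{Agt}(A)\subseteq\mathsf{Agt}(\Sigma\cup\Gamma\cup\Delta)\setminus\{a\}$; (ii) $\mathsf{G}(\mathbf{KT}^+_D)\vdash\Sigma\mid\Gamma,A\Rightarrow\Delta$; (iii) for all finite multisets $\Pi,\Lambda$ of formulas and every finite multiset $\Theta$ of outmost-boxed formulas with $p\notin\mathsf{V}(\Pi\cup\Lambda\cup\Theta)$ and $a\notin\mathsf{Agt}(\Pi\cup\Lambda\cup\Theta)$: if $\mathsf{G}(\mathbf{KT}^+_D)\vdash\Theta,\Sigma\mid\Pi,\Gamma\Rightarrow\Delta,\Lambda$, then $\mathsf{G}(\mathbf{KT}^+_D)\vdash\emptyset\mid\Theta,\Pi\Rightarrow A,\Lambda$.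
   Context: Language: fix a finite nonempty set $\mathsf{Agt}$ of agent symbols and a countable set $\mathsf{Prop}$ of propositional variables; $\mathsf{Grp}$ is the set of nonempty subsets of $\mathsf{Agt}$. Formulas: $\alpha::=p\mid\bot\mid\alpha\wedge\alpha\mid\alpha\vee\alpha\mid\alpha\rightarrow\alpha\mid\neg\alpha\mid D_G\alpha$ with $p\in\mathsf{Prop}$, $G\in\mathsf{Grp}$. $\mathsf{V}(\cdot)$ is the set of propositional variables occurring, $\mathsf{Agt}(\cdot)$ the set of agent symbols occurring (the union of all $G$ with $D_G$ occurring); for multisets these are unions. An outmost-boxed formula is one of the form $D_G\gamma$. Calculus $\mathsf{G}(\mathbf{KT}^+_D)$: a T-sequent $\Sigma\mid\Gamma\Rightarrow\Delta$ consists of finite multisets $\Gamma,\Delta$ of formulas and a finite multiset $\Sigma$ of outmost-boxed formulas; $\vdash S$ means $S$ is the root of a finite tree built from initial sequents by the rules. Initial sequents: $\Sigma\mid\Gamma,p\Rightarrow p,\Delta$ ($p\in\mathsf{Prop}$) and $\Sigma\mid\bot,\Gamma\Rightarrow\Delta$. Propositional rules (with $\Sigma$ unchanged): $(R\wedge)$ from $\Sigma\mid\Gamma\Rightarrow\Delta,\alpha_1$ and $\Sigma\mid\Gamma\Rightarrow\Delta,\alpha_2$ infer $\Sigma\mid\Gamma\Rightarrow\Delta,\alpha_1\wedge\alpha_2$; $(L\wedge)$ from $\Sigma\mid\alpha_1,\alpha_2,\Gamma\Rightarrow\Delta$ infer $\Sigma\mid\alpha_1\wedge\alpha_2,\Gamma\Rightarrow\Delta$;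 $(R\vee)$ from $\Sigma\mid\Gamma\Rightarrow\Delta,\alpha_1,\alpha_2$ infer $\Sigma\mid\Gamma\Rightarrow\Delta,\alpha_1\vee\alpha_2$; $(L\vee)$ from $\Sigma\mid\alpha_1,\Gamma\Rightarrow\Delta$ and $\Sigma\mid\alpha_2,\Gamma\Rightarrow\Delta$ infer $\Sigma\mid\alpha_1\vee\alpha_2,\Gamma\Rightarrow\Delta$; $(R\rightarrow)$ from $\Sigma\mid\alpha_1,\Gamma\Rightarrow\Delta,\alpha_2$ infer $\Sigma\mid\Gamma\Rightarrow\Delta,\alpha_1\rightarrow\alpha_2$; $(L\rightarrow)$ from $\Sigma\mid\Gamma\Rightarrow\Delta,\alpha_1$ and $\Sigma\mid\alpha_2,\Gamma\Rightarrow\Delta$ infer $\Sigma\mid\alpha_1\rightarrow\alpha_2,\Gamma\Rightarrow\Delta$; $(R\neg)$ from $\Sigma\mid\alpha,\Gamma\Rightarrow\Delta$ infer $\Sigma\mid\Gamma\Rightarrow\Delta,\neg\alpha$; $(L\neg)$ from $\Sigma\mid\Gamma\Rightarrow\Delta,\alpha$ infer $\Sigma\mid\neg\alpha,\Gamma\Rightarrow\Delta$. Modal rules: $(D_K^+)$: from $\emptyset\mid\alpha_1,\dots,\alpha_n\Rightarrow\beta$ ($n\ge0$) infer $\Sigma,D_{G_1}\alpha_1,\dots,D_{G_n}\alpha_n\mid\Pi\Rightarrow D_G\beta,\Omega$, provided $G_i\subseteq G$ for all $i$, $\Sigma$ consists only of formulas $D_H\gamma$ with $H\not\subseteq G$,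 $\Pi$ consists only of propositional variables and $\bot$, and $\Omega$ only of propositional variables, $\bot$ and outmost-boxed formulas; $(D_T^+)$: from $D_G\alpha,\Sigma\mid\Gamma,\alpha\Rightarrow\Delta$ infer $\Sigma\mid\Gamma,D_G\alpha\Rightarrow\Delta$. *)

(* Defs.v *)
From Stdlib Require Import List Permutation.
From mathcomp Require Import all_boot.
Set Implicit Arguments.
Unset Strict Implicit.
Unset Printing Implicit Defensive.

Section Logic.
Variable Agt : finType.

Definition grp := {G : {set Agt} | G != set0}.

Inductive form : Type :=
| Var : nat -> form
| Bot : form
| And : form -> form -> form
| Or  : form -> form -> form
| Imp : form -> form -> form
| Neg : form -> form
| Box : grp -> form -> form.

Fixpoint var_occ (q : nat) (f : form) : Prop :=
  match f with
  | Var r => q = r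
  | Bot => False
  | And f1 f2 | Or f1 f2 | Imp f1 f2 => var_occ q f1 \/ var_occ q f2
  | Neg f1 => var_occ q f1
  | Box _ f1 => var_occ q f1
  end.

Fixpoint agt_occ (b : Agt) (f : form) : Prop :=
  match f with
  | Var _ | Bot => False
  | And f1 f2 | Or f1 f2 | Imp f1 f2 => agt_occ b f1 \/ agt_occ b f2
  | Neg f1 => agt_occ b f1
  | Box G f1 => b \in sval G \/ agt_occ b f1
  end.

(* An outmost-boxed formula D_G gamma is represented by the pair (G, gamma). *)
Definition boxed (x : grp * form) : form := Box x.1 x.2.

Definition atom_or_bot (f : form) : Prop :=
  match f with Var _ | Bot => True | _ => False end.
Definition atom_bot_or_boxed (f : form) : Prop :=
  match f with Var _ | Bot | Box _ _ => True | _ => False end.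

(* Derivability in G(KT^+_D) of the T-sequent  Sigma | Gamma => Delta.
   Multisets are lists; the rule [d_perm] identifies lists up to permutation. *)
Inductive derivable : seq (grp * form) -> seq form -> seq form -> Prop :=
| d_perm S S' G G' D D' :
    Permutation S S' -> Permutation G G' -> Permutation D D' ->
    derivable S G D -> derivable S' G' D'
| d_id S G D p : derivable S (Var p :: G) (Var p :: D)
| d_bot S G D : derivable S (Bot :: G) D
| d_Rand S G D a1 a2 :
    derivable S G (a1 :: D) -> derivable S G (a2 :: D) ->
    derivable S G (And a1 a2 :: D)
| d_Land S G D a1 a2 :
    derivable S (a1 :: a2 :: G) D -> derivable S (And a1 a2 :: G) D
| d_Ror S G D a1 a2 :
    derivable S G (a1 :: a2 :: D) -> derivable S G (Or a1 a2 :: D)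
| d_Lor S G D a1 a2 :
    derivable S (a1 :: G) D -> derivable S (a2 :: G) D ->
    derivable S (Or a1 a2 :: G) D
| d_Rimp S G D a1 a2 :
    derivable S (a1 :: G) (a2 :: D) -> derivable S G (Imp a1 a2 :: D)
| d_Limp S G D a1 a2 :
    derivable S G (a1 :: D) -> derivable S (a2 :: G) D ->
    derivable S (Imp a1 a2 :: G) D
| d_Rneg S G D a :
    derivable S (a :: G) D -> derivable S G (Neg a :: D)
| d_Lneg S G D a :
    derivable S G (a :: D) -> derivable S (Neg a :: G) D
| d_DK S (L : seq (grp * form)) Pi Om (Gr : grp) b :
    derivable [::] (map snd L) [:: b] ->
    Forall (fun x : grp * form => sval x.1 \subset sval Gr) L ->
    Forall (fun x : grp * form => ~~ (sval x.1 \subset sval Gr)) S ->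
    Forall atom_or_bot Pi ->
    Forall atom_bot_or_boxed Om ->
    derivable (S ++ L) Pi (Box Gr b :: Om)
| d_DT S G D (Gr : grp) a :
    derivable ((Gr, a) :: S) (a :: G) D -> derivable S (Box Gr a :: G) D.

End Logic.

(* Main.v *)
Set Warnings "-notation-overridden".
Require Import Defs.
From Stdlib Require Import List Permutation ClassicalEpsilon Classical.
From mathcomp Require Import all_boot.
From mathcomp Require Import zify.
Set Implicit Arguments.
Unset Strict Implicit.
Unset Printing Implicit Defensive.

Section UI.
Variable Agt : finType.
Notation form := (form Agt).
Notation grp := (grp Agt).
Notation derivable := (@derivable Agt).

Definition grp_dec (x y : grp) : {x = y} + {x <> y}.
Proof. case: (eqVneq x y) => h; [left|right]; [exact h| exact/eqP]. Qed.

Definition form_dec (x y : form) : {x = y} + {x <> y}.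
Proof. decide equality; [apply PeanoNat.Nat.eq_dec | apply grp_dec]. Qed.

Definition pair_dec (x y : grp * form) : {x = y} + {x <> y}.
Proof. decide equality; [apply form_dec | apply grp_dec]. Qed.

Lemma count_occ_cat T (d : forall x y : T, {x = y} + {x <> y}) (l1 l2 : seq T) x :
  count_occ d (l1 ++ l2) x = (count_occ d l1 x + count_occ d l2 x)%coq_nat.
Proof. elim: l1 => //= y l IH. case: (d y x) => _; rewrite IH; lia. Qed.

Lemma perm_cnt T (d : forall x y : T, {x = y} + {x <> y}) (l1 l2 : seq T) :
  Permutation l1 l2 -> forall x, count_occ d l1 x = count_occ d l2 x.
Proof. move=> H; exact: (proj1 (Permutation_count_occ d l1 l2) H). Qed.

Lemma cnt_perm T (d : forall x y : T, {x = y} + {x <> y}) (l1 l2 : seq T) :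
  (forall x, count_occ d l1 x = count_occ d l2 x) -> Permutation l1 l2.
Proof. move=> H; exact: (proj2 (Permutation_count_occ d l1 l2) H). Qed.

Ltac dec_of T :=
  match T with
  | form => constr:(form_dec)
  | (grp * form)%type => constr:(pair_dec)
  | prod grp form => constr:(pair_dec)
  end.

Ltac psolve :=
  match goal with |- @Permutation ?T _ _ =>
    let d := dec_of T in
    apply (@cnt_perm _ d); let x := fresh "x" in intro x;
    repeat match goal with H : @Permutation T _ _ |- _ =>
      move: (@perm_cnt _ d _ _ H x); clear H end;
    repeat (rewrite ?count_occ_cat /=);
    repeat match goal with
           | |- context [d ?u x] => destruct (d u x)
           end;
    lia
  end.


Lemma In_cat T (x : T) l1 l2 : In x (l1 ++ l2) <-> In x l1 \/ In x l2.
Proof. elim: l1 => [|y l IH] /=; [tauto|rewrite IH; tauto]. Qed.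

Lemma In_map T U (f : T -> U) y l : In y (map f l) <-> exists x, f x = y /\ In x l.
Proof.
  elim: l => [|z l IH] /=; first by split => // -[x []].
  rewrite IH; split.
  - case=> [<-|[x [<- H]]]; [exists z; tauto | exists x; tauto].
  - case=> x [<- [->|H]]; [tauto| right; exists x; tauto].
Qed.

Lemma In_filter T (P : pred T) x l : In x (filter P l) <-> In x l /\ P x.
Proof.
  elim: l => [|y l IH] /=; first tauto.
  case Py: (P y) => /=; rewrite IH; split; try tauto; intuition; subst; congruence.
Qed.

Lemma In_split' T (x : T) l : In x l -> exists l1 l2, l = l1 ++ x :: l2.
Proof.
  elim: l => [|y l IH] //= [<-|H]; first by exists [::], l.
  case: (IH H) => l1 [l2 ->]; by exists (y :: l1), l2.
Qed.

Lemma Forall_In T (P : T -> Prop) l : Forall P l <-> (forall x, In x l -> P x).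
Proof. exact: Forall_forall. Qed.

Lemma Forall_perm T (P : T -> Prop) l l' : Permutation l l' -> Forall P l -> Forall P l'.
Proof. move=> Hp; rewrite !Forall_In => H x Hx; apply: H; exact: Permutation_in (Permutation_sym Hp) Hx. Qed.

Notation pf := (grp * form)%type.

Lemma fsplit (P : pred pf) (l : seq pf) : Permutation l (filter P l ++ filter (predC P) l).
Proof. elim: l => [|y l IH] //=. case: (P y) => /=; psolve. Qed.

Lemma perm_filter (P : pred pf) (l l' : seq pf) :
  Permutation l l' -> Permutation (filter P l) (filter P l').
Proof.
  elim => [|x m1 m2 _ IH|x y m|m1 m2 m3 _ IH1 _ IH2] /=.
  - done.
  - case: (P x) => //; exact: perm_skip.
  - case: (P x); case: (P y) => //; try exact: perm_swap; exact: Permutation_refl.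
  - exact: Permutation_trans IH1 IH2.
Qed.

Lemma filter_all (P : pred pf) l : Forall (fun x => P x) l -> filter P l = l.
Proof. elim: l => [|y l IH] //= H; inversion H; subst; by rewrite H2 IH. Qed.

Lemma filter_none (P : pred pf) l : Forall (fun x => ~~ P x) l -> filter P l = [::].
Proof. elim: l => [|y l IH] //= H; inversion H; subst; by rewrite (negbTE H2) IH. Qed.

Lemma Forall_filter (P : pred pf) l : Forall (fun x => P x) (filter P l).
Proof. rewrite Forall_In => x; rewrite In_filter; tauto. Qed.

Lemma Forall_filterC (P : pred pf) l : Forall (fun x => ~~ P x) (filter (predC P) l).
Proof. rewrite Forall_In => x; rewrite In_filter /=; tauto. Qed.

Lemma eq_in_filter' (P Q : pred pf) l : (forall x, In x l -> P x = Q x) -> filter P l = filter Q l.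
Proof. elim: l => [|y l IH] //= H. rewrite H /=; last by left. by rewrite IH // => x Hx; apply: H; right. Qed.

Fixpoint sz (f : form) : nat :=
  match f with
  | Var _ | Bot => 1
  | And x y | Or x y | Imp x y => (sz x + sz y).+1
  | Neg x => (sz x).+1
  | Box _ x => (sz x).+1
  end.
Definition sl (l : seq form) := sumn (map sz l).
Lemma sl_cat l1 l2 : sl (l1 ++ l2) = sl l1 + sl l2.
Proof. by rewrite /sl map_cat sumn_cat. Qed.
Lemma sl_cons x l : sl (x :: l) = sz x + sl l.
Proof. by []. Qed.
Arguments sl : simpl never.
Ltac slsimp := repeat (first [rewrite sl_cat | rewrite sl_cons]).

Lemma not_Forall_ex T (P : T -> Prop) l : ~ Forall P l -> exists x, In x l /\ ~ P x.
Proof.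
  move=> H; apply: NNPP => H'; apply: H; rewrite Forall_In => x Hx.
  apply: NNPP => Hn; apply: H'; by exists x.
Qed.

Section DKweak.
Variables (S0 L : seq pf) (Pi Om : seq form) (Gr : grp) (b : form).
Hypothesis Hprem : forall S' G' D', derivable (S' ++ [::]) (G' ++ map snd L) (D' ++ [:: b]).
Hypothesis HL : Forall (fun x : pf => sval x.1 \subset sval Gr) L.
Hypothesis HS : Forall (fun x : pf => ~~ (sval x.1 \subset sval Gr)) S0.
Hypothesis HPi : Forall (@atom_or_bot Agt) Pi.
Hypothesis HOm : Forall (@atom_bot_or_boxed Agt) Om.

Lemma dkweak_aux n : forall S' G' D', sl G' + sl D' < n ->
  derivable (S' ++ (S0 ++ L)) (G' ++ Pi) (D' ++ Box Gr b :: Om).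
Proof.
  elim: n => [|n IH] S' G' D' Hn; first lia.
  case: (classic (Forall (@atom_or_bot Agt) G')) => HG; last first.
  { case: (not_Forall_ex HG) => x [Hx Hnx]; clear HG.
    case: (In_split' Hx) => G1 [G2 E]; subst G'.
    move: Hn; slsimp => /= Hn.
    case: x Hx Hnx Hn => [q|| y z|y z|y z|y|H c] _ Hnx Hn; simpl in Hn; try (by case: Hnx).
    - apply: (d_perm (S := S' ++ (S0 ++ L)) (G := And y z :: (G1 ++ G2 ++ Pi)) (D := D' ++ Box Gr b :: Om));
        [exact: Permutation_refl|psolve|exact: Permutation_refl|].
      apply: d_Land. apply: (d_perm (S := S' ++ (S0 ++ L)) (G := (y :: z :: G1 ++ G2) ++ Pi) (D := D' ++ Box Gr b :: Om));
        [exact: Permutation_refl|psolve|exact: Permutation_refl|].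
      apply: IH; slsimp => /=; lia.
    - apply: (d_perm (S := S' ++ (S0 ++ L)) (G := Or y z :: (G1 ++ G2 ++ Pi)) (D := D' ++ Box Gr b :: Om));
        [exact: Permutation_refl|psolve|exact: Permutation_refl|].
      apply: d_Lor.
      + apply: (d_perm (S := S' ++ (S0 ++ L)) (G := (y :: G1 ++ G2) ++ Pi) (D := D' ++ Box Gr b :: Om));
        [exact: Permutation_refl|psolve|exact: Permutation_refl|].
        apply: IH; slsimp => /=; lia.
      + apply: (d_perm (S := S' ++ (S0 ++ L)) (G := (z :: G1 ++ G2) ++ Pi) (D := D' ++ Box Gr b :: Om));
        [exact: Permutation_refl|psolve|exact: Permutation_refl|].
        apply: IH; slsimp => /=; lia.
    - apply: (d_perm (S := S' ++ (S0 ++ L)) (G := Imp y z :: (G1 ++ G2 ++ Pi)) (D := D' ++ Box Gr b :: Om));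
        [exact: Permutation_refl|psolve|exact: Permutation_refl|].
      apply: d_Limp.
      + apply: (d_perm (S := S' ++ (S0 ++ L)) (G := (G1 ++ G2) ++ Pi) (D := (y :: D') ++ Box Gr b :: Om));
        [exact: Permutation_refl|psolve|psolve|].
        apply: IH; slsimp => /=; lia.
      + apply: (d_perm (S := S' ++ (S0 ++ L)) (G := (z :: G1 ++ G2) ++ Pi) (D := D' ++ Box Gr b :: Om));
        [exact: Permutation_refl|psolve|exact: Permutation_refl|].
        apply: IH; slsimp => /=; lia.
    - apply: (d_perm (S := S' ++ (S0 ++ L)) (G := Neg y :: (G1 ++ G2 ++ Pi)) (D := D' ++ Box Gr b :: Om));
        [exact: Permutation_refl|psolve|exact: Permutation_refl|].
      apply: d_Lneg.
      apply: (d_perm (S := S' ++ (S0 ++ L)) (G := (G1 ++ G2) ++ Pi) (D := (y :: D') ++ Box Gr b :: Om));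
        [exact: Permutation_refl|psolve|psolve|].
      apply: IH; slsimp => /=; lia.
    - apply: (d_perm (S := S' ++ (S0 ++ L)) (G := Box H c :: (G1 ++ G2 ++ Pi)) (D := D' ++ Box Gr b :: Om));
        [exact: Permutation_refl|psolve|exact: Permutation_refl|].
      apply: d_DT.
      apply: (d_perm (S := ((H, c) :: S') ++ (S0 ++ L)) (G := (c :: G1 ++ G2) ++ Pi) (D := D' ++ Box Gr b :: Om));
        [psolve|psolve|exact: Permutation_refl|].
      apply: IH; slsimp => /=; lia. }
  case: (classic (Forall (@atom_bot_or_boxed Agt) D')) => HD; last first.
  { case: (not_Forall_ex HD) => x [Hx Hnx]; clear HD.
    case: (In_split' Hx) => D1 [D2 E]; subst D'.
    move: Hn; slsimp => /= Hn.
    case: x Hx Hnx Hn => [q|| y z|y z|y z|y|H c] _ Hnx Hn; simpl in Hn; try (by case: Hnx).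
    - apply: (d_perm (S := S' ++ (S0 ++ L)) (G := G' ++ Pi) (D := And y z :: (D1 ++ D2 ++ Box Gr b :: Om)));
        [exact: Permutation_refl|exact: Permutation_refl|psolve|].
      apply: d_Rand.
      + apply: (d_perm (S := S' ++ (S0 ++ L)) (G := G' ++ Pi) (D := (y :: D1 ++ D2) ++ Box Gr b :: Om));
        [exact: Permutation_refl|exact: Permutation_refl|psolve|].
        apply: IH; slsimp => /=; lia.
      + apply: (d_perm (S := S' ++ (S0 ++ L)) (G := G' ++ Pi) (D := (z :: D1 ++ D2) ++ Box Gr b :: Om));
        [exact: Permutation_refl|exact: Permutation_refl|psolve|].
        apply: IH; slsimp => /=; lia.
    - apply: (d_perm (S := S' ++ (S0 ++ L)) (G := G' ++ Pi) (D := Or y z :: (D1 ++ D2 ++ Box Gr b :: Om)));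
        [exact: Permutation_refl|exact: Permutation_refl|psolve|].
      apply: d_Ror.
      apply: (d_perm (S := S' ++ (S0 ++ L)) (G := G' ++ Pi) (D := (y :: z :: D1 ++ D2) ++ Box Gr b :: Om));
        [exact: Permutation_refl|exact: Permutation_refl|psolve|].
      apply: IH; slsimp => /=; lia.
    - apply: (d_perm (S := S' ++ (S0 ++ L)) (G := G' ++ Pi) (D := Imp y z :: (D1 ++ D2 ++ Box Gr b :: Om)));
        [exact: Permutation_refl|exact: Permutation_refl|psolve|].
      apply: d_Rimp.
      apply: (d_perm (S := S' ++ (S0 ++ L)) (G := (y :: G') ++ Pi) (D := (z :: D1 ++ D2) ++ Box Gr b :: Om));
        [exact: Permutation_refl|psolve|psolve|].
      apply: IH; slsimp => /=; lia.
    - apply: (d_perm (S := S' ++ (S0 ++ L)) (G := G' ++ Pi) (D := Neg y :: (D1 ++ D2 ++ Box Gr b :: Om)));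
        [exact: Permutation_refl|exact: Permutation_refl|psolve|].
      apply: d_Rneg.
      apply: (d_perm (S := S' ++ (S0 ++ L)) (G := (y :: G') ++ Pi) (D := (D1 ++ D2) ++ Box Gr b :: Om));
        [exact: Permutation_refl|psolve|psolve|].
      apply: IH; slsimp => /=; lia. }
  set P := (fun x : pf => sval x.1 \subset sval Gr).
  apply: (d_perm (S := (filter (predC P) S' ++ S0) ++ (filter P S' ++ L)) (G := G' ++ Pi) (D := Box Gr b :: (D' ++ Om))).
  - move: (fsplit P S') => H; psolve.
  - exact: Permutation_refl.
  - psolve.
  - apply: d_DK.
    + move: (Hprem [::] (map snd (filter P S')) [::]); rewrite map_cat cats0 //.
    + rewrite Forall_In => x; rewrite In_cat => -[].
      * rewrite In_filter; by case.
      * by move: HL; rewrite Forall_In => H /H.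
    + rewrite Forall_In => x; rewrite In_cat => -[].
      * rewrite In_filter /= /P; by case.
      * by move: HS; rewrite Forall_In => H /H.
    + move: HG HPi; rewrite !Forall_In => H1 H2 x; rewrite In_cat => -[/H1|/H2] //.
    + move: HD HOm; rewrite !Forall_In => H1 H2 x; rewrite In_cat => -[/H1|/H2] //.
Qed.
End DKweak.


Ltac pr := first [exact: Permutation_refl | psolve].

Lemma weak S G D : derivable S G D ->
  forall S' G' D', derivable (S' ++ S) (G' ++ G) (D' ++ D).
Proof.
  elim=> {S G D}.
  - move=> S S1 G G1 D D1 HS HG HD _ IH S' G' D'.
    apply: (d_perm _ _ _ (IH S' G' D')); pr.
  - move=> S G D q S' G' D'.
    apply: (d_perm (S := S' ++ S) (G := Var _ q :: (G' ++ G)) (D := Var _ q :: (D' ++ D))); try pr.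
    exact: d_id.
  - move=> S G D S' G' D'.
    apply: (d_perm (S := S' ++ S) (G := Bot _ :: (G' ++ G)) (D := D' ++ D)); try pr.
    exact: d_bot.
  - move=> S G D a1 a2 _ IH1 _ IH2 S' G' D'.
    apply: (d_perm (S := S' ++ S) (G := G' ++ G) (D := And a1 a2 :: (D' ++ D))); try pr.
    apply: d_Rand.
    + apply: (d_perm _ _ _ (IH1 S' G' D')); pr.
    + apply: (d_perm _ _ _ (IH2 S' G' D')); pr.
  - move=> S G D a1 a2 _ IH1 S' G' D'.
    apply: (d_perm (S := S' ++ S) (G := And a1 a2 :: (G' ++ G)) (D := (D' ++ D))); try pr.
    apply: d_Land. apply: (d_perm _ _ _ (IH1 S' G' D')); pr.
  - move=> S G D a1 a2 _ IH1 S' G' D'.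
    apply: (d_perm (S := S' ++ S) (G := G' ++ G) (D := Or a1 a2 :: (D' ++ D))); try pr.
    apply: d_Ror. apply: (d_perm _ _ _ (IH1 S' G' D')); pr.
  - move=> S G D a1 a2 _ IH1 _ IH2 S' G' D'.
    apply: (d_perm (S := S' ++ S) (G := Or a1 a2 :: (G' ++ G)) (D := (D' ++ D))); try pr.
    apply: d_Lor.
    + apply: (d_perm _ _ _ (IH1 S' G' D')); pr.
    + apply: (d_perm _ _ _ (IH2 S' G' D')); pr.
  - move=> S G D a1 a2 _ IH1 S' G' D'.
    apply: (d_perm (S := S' ++ S) (G := G' ++ G) (D := Imp a1 a2 :: (D' ++ D))); try pr.
    apply: d_Rimp. apply: (d_perm _ _ _ (IH1 S' G' D')); pr.
  - move=> S G D a1 a2 _ IH1 _ IH2 S' G' D'.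
    apply: (d_perm (S := S' ++ S) (G := Imp a1 a2 :: (G' ++ G)) (D := (D' ++ D))); try pr.
    apply: d_Limp.
    + apply: (d_perm _ _ _ (IH1 S' G' D')); pr.
    + apply: (d_perm _ _ _ (IH2 S' G' D')); pr.
  - move=> S G D a1 _ IH1 S' G' D'.
    apply: (d_perm (S := S' ++ S) (G := G' ++ G) (D := Neg a1 :: (D' ++ D))); try pr.
    apply: d_Rneg. apply: (d_perm _ _ _ (IH1 S' G' D')); pr.
  - move=> S G D a1 _ IH1 S' G' D'.
    apply: (d_perm (S := S' ++ S) (G := Neg a1 :: (G' ++ G)) (D := (D' ++ D))); try pr.
    apply: d_Lneg. apply: (d_perm _ _ _ (IH1 S' G' D')); pr.
  - move=> S L Pi Om Gr b _ IH HL HS HPi HOm S' G' D'.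
    apply: (@dkweak_aux S L Pi Om Gr b IH HL HS HPi HOm (sl G' + sl D').+1); lia.
  - move=> S G D Gr a1 _ IH1 S' G' D'.
    apply: (d_perm (S := S' ++ S) (G := Box Gr a1 :: (G' ++ G)) (D := (D' ++ D))); try pr.
    apply: d_DT. apply: (d_perm _ _ _ (IH1 S' G' D')); pr.
Qed.

Lemma weakL S G D x : derivable S G D -> derivable S (x :: G) D.
Proof. move=> H; exact: (weak H [::] [:: x] [::]). Qed.
Lemma weakR S G D x : derivable S G D -> derivable S G (x :: D).
Proof. move=> H; exact: (weak H [::] [::] [:: x]). Qed.
Lemma weakLs S G D E : derivable S G D -> derivable S (E ++ G) D.
Proof. move=> H; exact: (weak H [::] E [::]). Qed.


Variable p : nat.
Variable a : Agt.

Definition free (f : form) := ~ var_occ p f /\ ~ agt_occ a f.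
Definition ctxfree (Th : seq pf) (Pi La : seq form) :=
  forall f, In f (map (@boxed Agt) Th ++ Pi ++ La) -> ~ var_occ p f /\ ~ agt_occ a f.

Lemma ctx_intro Th Pi La :
  (forall t, In t Th -> free (boxed t)) -> (forall f, In f Pi -> free f) ->
  (forall f, In f La -> free f) -> ctxfree Th Pi La.
Proof.
  move=> H1 H2 H3 f; rewrite !In_cat In_map => -[[t [<- Ht]]|[Hf|Hf]]; [exact: H1|exact: H2|exact: H3].
Qed.
Lemma ctx_Th Th Pi La t : ctxfree Th Pi La -> In t Th -> free (boxed t).
Proof. move=> H Ht; apply: H; rewrite In_cat In_map; left; by exists t. Qed.
Lemma ctx_Pi Th Pi La f : ctxfree Th Pi La -> In f Pi -> free f.
Proof. move=> H Ht; apply: H; rewrite !In_cat; tauto. Qed.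
Lemma ctx_La Th Pi La f : ctxfree Th Pi La -> In f La -> free f.
Proof. move=> H Ht; apply: H; rewrite !In_cat; tauto. Qed.

Lemma ctx_perm Th Pi La Th' Pi' La' : ctxfree Th Pi La ->
  Permutation Th Th' -> Permutation Pi Pi' -> Permutation La La' -> ctxfree Th' Pi' La'.
Proof.
  move=> H h1 h2 h3; apply: ctx_intro.
  - move=> t Ht; apply: (ctx_Th H); exact: Permutation_in (Permutation_sym h1) Ht.
  - move=> t Ht; apply: (ctx_Pi H); exact: Permutation_in (Permutation_sym h2) Ht.
  - move=> t Ht; apply: (ctx_La H); exact: Permutation_in (Permutation_sym h3) Ht.
Qed.

Lemma ctx_rmPi Th Pi1 x Pi2 La : ctxfree Th (Pi1 ++ x :: Pi2) La -> free x /\ ctxfree Th (Pi1 ++ Pi2) La.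
Proof.
  move=> H; split; first by apply: (ctx_Pi H); rewrite In_cat /=; tauto.
  apply: ctx_intro; [move=> ?; exact: ctx_Th H| |move=> ?; exact: ctx_La H].
  move=> f; rewrite In_cat => Hf; apply: (ctx_Pi H); rewrite In_cat /=; tauto.
Qed.
Lemma ctx_rmLa Th Pi La1 x La2 : ctxfree Th Pi (La1 ++ x :: La2) -> free x /\ ctxfree Th Pi (La1 ++ La2).
Proof.
  move=> H; split; first by apply: (ctx_La H); rewrite In_cat /=; tauto.
  apply: ctx_intro; [move=> ?; exact: ctx_Th H|move=> ?; exact: ctx_Pi H|].
  move=> f; rewrite In_cat => Hf; apply: (ctx_La H); rewrite In_cat /=; tauto.
Qed.
Lemma ctx_addPi Th Pi La x : ctxfree Th Pi La -> free x -> ctxfree Th (x :: Pi) La.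
Proof.
  move=> H Hx; apply: ctx_intro; [move=> ?; exact: ctx_Th H| |move=> ?; exact: ctx_La H].
  move=> f /= [<-|Hf] //; exact: ctx_Pi H Hf.
Qed.
Lemma ctx_addLa Th Pi La x : ctxfree Th Pi La -> free x -> ctxfree Th Pi (x :: La).
Proof.
  move=> H Hx; apply: ctx_intro; [move=> ?; exact: ctx_Th H|move=> ?; exact: ctx_Pi H|].
  move=> f /= [<-|Hf] //; exact: ctx_La H Hf.
Qed.
Lemma ctx_addTh Th Pi La t : ctxfree Th Pi La -> free (boxed t) -> ctxfree (t :: Th) Pi La.
Proof.
  move=> H Hx; apply: ctx_intro; [|move=> ?; exact: ctx_Pi H|move=> ?; exact: ctx_La H].
  move=> f /= [<-|Hf] //; exact: ctx_Th H Hf.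
Qed.

Lemma free_And x y : free (And x y) -> free x /\ free y.
Proof. rewrite /free /=; tauto. Qed.
Lemma free_Or x y : free (Or x y) -> free x /\ free y.
Proof. rewrite /free /=; tauto. Qed.
Lemma free_Imp x y : free (Imp x y) -> free x /\ free y.
Proof. rewrite /free /=; tauto. Qed.
Lemma free_Neg x : free (Neg x) -> free x.
Proof. rewrite /free /=; tauto. Qed.
Lemma free_Box G x : free (Box G x) -> free x.
Proof. rewrite /free /=; tauto. Qed.

Lemma locate (x : form) Y0 Pi Ga : Permutation (x :: Y0) (Pi ++ Ga) ->
  (exists P1 P2, Pi = P1 ++ x :: P2 /\ Permutation Y0 (P1 ++ P2 ++ Ga)) \/
  (exists G1 G2, Ga = G1 ++ x :: G2 /\ Permutation Y0 (Pi ++ G1 ++ G2)).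
Proof.
  move=> H. have: In x (Pi ++ Ga) by apply: (Permutation_in x H); left.
  rewrite In_cat => -[Hx|Hx].
  - left; case: (In_split' Hx) => P1 [P2 E]; exists P1, P2; split => //; subst Pi.
    apply: (Permutation_cons_inv (a := x)). psolve.
  - right; case: (In_split' Hx) => P1 [P2 E]; exists P1, P2; split => //; subst Ga.
    apply: (Permutation_cons_inv (a := x)). psolve.
Qed.

Definition seqnt := (seq pf * seq form * seq form)%type.

Definition lprems (Sg : seq pf) (x : form) (G D : seq form) : option (seq seqnt) :=
  match x with
  | And a1 a2 => Some [:: (Sg, a1 :: a2 :: G, D)]
  | Or a1 a2 => Some [:: (Sg, a1 :: G, D); (Sg, a2 :: G, D)]
  | Imp a1 a2 => Some [:: (Sg, G, a1 :: D); (Sg, a2 :: G, D)]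
  | Neg a1 => Some [:: (Sg, G, a1 :: D)]
  | Box Gr a0 => Some [:: ((Gr, a0) :: Sg, a0 :: G, D)]
  | _ => None
  end.

Definition rprems (Sg : seq pf) (G : seq form) (x : form) (D : seq form) : option (seq seqnt) :=
  match x with
  | And a1 a2 => Some [:: (Sg, G, a1 :: D); (Sg, G, a2 :: D)]
  | Or a1 a2 => Some [:: (Sg, G, a1 :: a2 :: D)]
  | Imp a1 a2 => Some [:: (Sg, a1 :: G, a2 :: D)]
  | Neg a1 => Some [:: (Sg, a1 :: G, D)]
  | _ => None
  end.

Definition sat (G D : seq form) := Forall (@atom_or_bot Agt) G /\ Forall (@atom_bot_or_boxed Agt) D.

Notation "'PG' Gr" := (fun x : pf => sval x.1 \subset sval Gr) (at level 10).


Lemma perm_map (f : pf -> form) (l l' : seq pf) : Permutation l l' -> Permutation (map f l) (map f l').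
Proof.
  elim => [|x m1 m2 _ IH|x y m|m1 m2 m3 _ IH1 _ IH2] /=.
  - done.
  - exact: perm_skip.
  - exact: perm_swap.
  - exact: Permutation_trans IH1 IH2.
Qed.

Lemma Forall_catl T (P : T -> Prop) l1 l2 : Forall P (l1 ++ l2) -> Forall P l1.
Proof. rewrite !Forall_In => H x Hx; apply: H; rewrite In_cat; tauto. Qed.
Lemma Forall_catr T (P : T -> Prop) l1 l2 : Forall P (l1 ++ l2) -> Forall P l2.
Proof. rewrite !Forall_In => H x Hx; apply: H; rewrite In_cat; tauto. Qed.
Lemma Forall_cat T (P : T -> Prop) l1 l2 : Forall P l1 -> Forall P l2 -> Forall P (l1 ++ l2).
Proof. rewrite !Forall_In => H1 H2 x; rewrite In_cat => -[/H1|/H2] //. Qed.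

Lemma hasF_filter T (P : pred T) l : has P l = false -> filter P l = [::].
Proof. move=> H; apply: size0nil; move: (size_filter_gt0 P l); rewrite H; lia. Qed.

Ltac sctx := first [assumption | apply: ctx_addPi; [sctx|assumption] | apply: ctx_addLa; [sctx|assumption] | apply: ctx_addTh; [sctx|assumption]].
Ltac fin := first [done | sctx | pr].

Ltac dpm X Y Z := apply: (d_perm (S:=X) (G:=Y) (D:=Z)); [pr|pr|pr|].

Section Core.
Variables (Sg : seq pf) (Ga De : seq form) (A : form).
Hypothesis Hnd : ~ derivable Sg Ga De.
Hypothesis HR : forall q, In (Var _ q) De -> q <> p -> forall Th Pi La,
  derivable Th Pi (Var _ q :: La) -> derivable Th Pi (A :: La).
Hypothesis HLq : forall q, In (Var _ q) Ga -> q <> p -> forall Th Pi La,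
  derivable Th Pi (Neg (Var _ q) :: La) -> derivable Th Pi (A :: La).
Hypothesis HsL : forall G1 x G2 ps, Ga = G1 ++ x :: G2 -> lprems Sg x (G1 ++ G2) De = Some ps ->
  forall Th Pi La, ctxfree Th Pi La ->
  (forall s, In s ps -> derivable (Th ++ s.1.1) (Pi ++ s.1.2) (s.2 ++ La)) ->
  derivable Th Pi (A :: La).
Hypothesis HsR : forall D1 x D2 ps, De = D1 ++ x :: D2 -> rprems Sg Ga x (D1 ++ D2) = Some ps ->
  forall Th Pi La, ctxfree Th Pi La ->
  (forall s, In s ps -> derivable (Th ++ s.1.1) (Pi ++ s.1.2) (s.2 ++ La)) ->
  derivable Th Pi (A :: La).
Hypothesis HM1 : sat Ga De -> forall (Gr : grp) b Th Pi La0, a \notin sval Gr ->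
  has (PG Gr) Sg -> ctxfree Th Pi (Box Gr b :: La0) ->
  Forall (@atom_or_bot Agt) Pi -> Forall (@atom_bot_or_boxed Agt) La0 ->
  derivable [::] (map snd (filter (PG Gr) Th) ++ map snd (filter (PG Gr) Sg)) [:: b] ->
  derivable Th Pi (A :: Box Gr b :: La0).
Hypothesis HM2 : sat Ga De -> forall (Gr : grp) b Th Pi La, In (Box Gr b) De ->
  ctxfree Th Pi La -> filter (PG Gr) Th <> [::] ->
  Forall (@atom_or_bot Agt) Pi -> Forall (@atom_bot_or_boxed Agt) La ->
  derivable [::] (map snd (filter (PG Gr) Th) ++ map snd (filter (PG Gr) Sg)) [:: b] ->
  derivable Th Pi (A :: La).

Lemma core X Y Z : derivable X Y Z -> forall Th Pi La, ctxfree Th Pi La ->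
  Permutation X (Th ++ Sg) -> Permutation Y (Pi ++ Ga) -> Permutation Z (De ++ La) ->
  derivable Th Pi (A :: La).
Proof.
  elim=> {X Y Z}.
  -
    move=> S S1 G G1 D D1 hS hG hD _ IH Th Pi La Hc h1 h2 h3.
    apply: IH => //; [exact: Permutation_trans hS h1|exact: Permutation_trans hG h2|exact: Permutation_trans hD h3].
  -
    move=> S G D q Th Pi La Hc h1 h2 h3.
    case: (locate h2) => [[P1 [P2 [EP hY]]]|[G1 [G2 [EG hY]]]];
    case: (locate h3) => [[D1 [D2 [ED hZ]]]|[L1 [L2 [EL hZ]]]].
    + have Hq : q <> p.
      { subst Pi. case: (ctx_rmPi Hc) => -[Hf _] _ Hqp; apply: Hf; by rewrite Hqp. }
      apply: (HR (q := q)) => //; first by rewrite ED In_cat /=; tauto.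
      subst Pi. dpm Th (Var _ q :: P1 ++ P2) (Var _ q :: La). exact: d_id.
    + subst Pi La. dpm Th (Var _ q :: P1 ++ P2) (Var _ q :: A :: L1 ++ L2). exact: d_id.
    + exfalso; apply: Hnd. subst Ga De. dpm Sg (Var _ q :: G1 ++ G2) (Var _ q :: D1 ++ D2). exact: d_id.
    + have Hq : q <> p.
      { subst La. case: (ctx_rmLa Hc) => -[Hf _] _ Hqp; apply: Hf; by rewrite Hqp. }
      apply: (HLq (q := q)) => //; first by rewrite EG In_cat /=; tauto.
      apply: d_Rneg. subst La. dpm Th (Var _ q :: Pi) (Var _ q :: L1 ++ L2). exact: d_id.
  -
    move=> S G D Th Pi La Hc h1 h2 h3.
    case: (locate h2) => [[P1 [P2 [EP hY]]]|[G1 [G2 [EG hY]]]].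
    + subst Pi. dpm Th (Bot _ :: P1 ++ P2) (A :: La). exact: d_bot.
    + exfalso; apply: Hnd. subst Ga. dpm Sg (Bot _ :: G1 ++ G2) De. exact: d_bot.
  -
    move=> S G D a1 a2 Hd1 IH1 Hd2 IH2 Th Pi La Hc h1 h2 h3.
    case: (locate h3) => [[D1 [D2 [ED hZ]]]|[L1 [L2 [EL hZ]]]].
    + apply: (HsR ED (ps := [:: (Sg, Ga, a1 :: D1 ++ D2); (Sg, Ga, a2 :: D1 ++ D2)])) => //.
      move=> s /= [<-|[<-|[]]] /=.
      * dpm S G (a1 :: D); exact: Hd1.
      * dpm S G (a2 :: D); exact: Hd2.
    + subst La. case: (ctx_rmLa Hc) => /free_And [f1 f2] Hc'.
      dpm Th Pi (And a1 a2 :: A :: L1 ++ L2). apply: d_Rand.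
      * dpm Th Pi (A :: a1 :: L1 ++ L2). apply: IH1; fin.
      * dpm Th Pi (A :: a2 :: L1 ++ L2). apply: IH2; fin.
  -
    move=> S G D a1 a2 Hd1 IH1 Th Pi La Hc h1 h2 h3.
    case: (locate h2) => [[P1 [P2 [EP hY]]]|[G1 [G2 [EG hY]]]].
    + subst Pi. case: (ctx_rmPi Hc) => /free_And [f1 f2] Hc'.
      dpm Th (And a1 a2 :: P1 ++ P2) (A :: La). apply: d_Land.
      apply: IH1; fin.
    + apply: (HsL EG (ps := [:: (Sg, a1 :: a2 :: G1 ++ G2, De)])) => //.
      move=> s /= [<-|[]] /=. dpm S (a1 :: a2 :: G) D; exact: Hd1.
  -
    move=> S G D a1 a2 Hd1 IH1 Th Pi La Hc h1 h2 h3.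
    case: (locate h3) => [[D1 [D2 [ED hZ]]]|[L1 [L2 [EL hZ]]]].
    + apply: (HsR ED (ps := [:: (Sg, Ga, a1 :: a2 :: D1 ++ D2)])) => //.
      move=> s /= [<-|[]] /=. dpm S G (a1 :: a2 :: D); exact: Hd1.
    + subst La. case: (ctx_rmLa Hc) => /free_Or [f1 f2] Hc'.
      dpm Th Pi (Or a1 a2 :: A :: L1 ++ L2). apply: d_Ror.
      dpm Th Pi (A :: a1 :: a2 :: L1 ++ L2). apply: IH1; fin.
  -
    move=> S G D a1 a2 Hd1 IH1 Hd2 IH2 Th Pi La Hc h1 h2 h3.
    case: (locate h2) => [[P1 [P2 [EP hY]]]|[G1 [G2 [EG hY]]]].
    + subst Pi. case: (ctx_rmPi Hc) => /free_Or [f1 f2] Hc'.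
      dpm Th (Or a1 a2 :: P1 ++ P2) (A :: La). apply: d_Lor.
      * apply: IH1; fin.
      * apply: IH2; fin.
    + apply: (HsL EG (ps := [:: (Sg, a1 :: G1 ++ G2, De); (Sg, a2 :: G1 ++ G2, De)])) => //.
      move=> s /= [<-|[<-|[]]] /=.
      * dpm S (a1 :: G) D; exact: Hd1.
      * dpm S (a2 :: G) D; exact: Hd2.
  -
    move=> S G D a1 a2 Hd1 IH1 Th Pi La Hc h1 h2 h3.
    case: (locate h3) => [[D1 [D2 [ED hZ]]]|[L1 [L2 [EL hZ]]]].
    + apply: (HsR ED (ps := [:: (Sg, a1 :: Ga, a2 :: D1 ++ D2)])) => //.
      move=> s /= [<-|[]] /=. dpm S (a1 :: G) (a2 :: D); exact: Hd1.
    + subst La. case: (ctx_rmLa Hc) => /free_Imp [f1 f2] Hc'.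
      dpm Th Pi (Imp a1 a2 :: A :: L1 ++ L2). apply: d_Rimp.
      dpm Th (a1 :: Pi) (A :: a2 :: L1 ++ L2).
      apply: IH1; fin.
  -
    move=> S G D a1 a2 Hd1 IH1 Hd2 IH2 Th Pi La Hc h1 h2 h3.
    case: (locate h2) => [[P1 [P2 [EP hY]]]|[G1 [G2 [EG hY]]]].
    + subst Pi. case: (ctx_rmPi Hc) => /free_Imp [f1 f2] Hc'.
      dpm Th (Imp a1 a2 :: P1 ++ P2) (A :: La). apply: d_Limp.
      * dpm Th (P1 ++ P2) (A :: a1 :: La). apply: IH1; fin.
      * apply: IH2; fin.
    + apply: (HsL EG (ps := [:: (Sg, G1 ++ G2, a1 :: De); (Sg, a2 :: G1 ++ G2, De)])) => //.
      move=> s /= [<-|[<-|[]]] /=.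
      * dpm S G (a1 :: D); exact: Hd1.
      * dpm S (a2 :: G) D; exact: Hd2.
  -
    move=> S G D a1 Hd1 IH1 Th Pi La Hc h1 h2 h3.
    case: (locate h3) => [[D1 [D2 [ED hZ]]]|[L1 [L2 [EL hZ]]]].
    + apply: (HsR ED (ps := [:: (Sg, a1 :: Ga, D1 ++ D2)])) => //.
      move=> s /= [<-|[]] /=. dpm S (a1 :: G) D; exact: Hd1.
    + subst La. case: (ctx_rmLa Hc) => /free_Neg f1 Hc'.
      dpm Th Pi (Neg a1 :: A :: L1 ++ L2). apply: d_Rneg.
      apply: IH1; fin.
  -
    move=> S G D a1 Hd1 IH1 Th Pi La Hc h1 h2 h3.
    case: (locate h2) => [[P1 [P2 [EP hY]]]|[G1 [G2 [EG hY]]]].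
    + subst Pi. case: (ctx_rmPi Hc) => /free_Neg f1 Hc'.
      dpm Th (Neg a1 :: P1 ++ P2) (A :: La). apply: d_Lneg.
      dpm Th (P1 ++ P2) (A :: a1 :: La). apply: IH1; fin.
    + apply: (HsL EG (ps := [:: (Sg, G1 ++ G2, a1 :: De)])) => //.
      move=> s /= [<-|[]] /=. dpm S G (a1 :: D); exact: Hd1.
  -
    move=> S0 L Pi0 Om Gr b Hprem _ HL HS HPi HOm Th Pi La Hc h1 h2 h3.
    set P := PG Gr.
    have hL : Permutation L (filter P Th ++ filter P Sg).
    { have := perm_filter P h1. rewrite filter_cat (@filter_none P S0 HS) (@filter_all P L HL) /= -filter_cat //. }
    have hPG := Forall_perm h2 HPi.
    have hPi := Forall_catl hPG. have hGa := Forall_catr hPG.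
    have Hprem' : derivable [::] (map snd (filter P Th) ++ map snd (filter P Sg)) [:: b].
    { apply: (d_perm _ _ _ Hprem); [exact: Permutation_refl| rewrite -map_cat; exact: perm_map hL|exact: Permutation_refl]. }
    case: (locate h3) => [[D1 [D2 [ED hZ]]]|[L1 [L2 [EL hZ]]]].
    + have hOm := Forall_perm hZ HOm.
      have hsat : sat Ga De.
      { split => //. rewrite ED; apply: Forall_cat; first exact: Forall_catl hOm.
        constructor; first done. exact: Forall_catl (Forall_catr hOm). }
      case E: (filter P Th) => [|t Tl].
      * exfalso; apply: Hnd. rewrite E /= in Hprem'. have := fsplit P Sg => hsp.
        subst De. dpm (filter (predC P) Sg ++ filter P Sg) Ga (Box Gr b :: D1 ++ D2).
        apply: d_DK => //.
        -- exact: Forall_filter.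
        -- exact: Forall_filterC.
        -- exact: Forall_cat (Forall_catl hOm) (Forall_catl (Forall_catr hOm)).
      * apply: (HM2 hsat (Gr := Gr) (b := b)) => //.
        -- rewrite ED In_cat /=; tauto.
        -- by rewrite E.
        -- exact: Forall_catr (Forall_catr hOm).
    + have hOm := Forall_perm hZ HOm.
      have hsat : sat Ga De by split => //; exact: Forall_catl hOm.
      subst La.
      have fB : free (Box Gr b) by apply: (ctx_La Hc); rewrite In_cat /=; tauto.
      have haGr : a \notin sval Gr.
      { apply/negP => Ha; apply: fB.2; simpl; by left. }
      case Hh: (has P Sg).
      * dpm Th Pi (A :: Box Gr b :: L1 ++ L2). apply: HM1 => //.
        -- apply: (ctx_perm Hc); pr.
        -- exact: Forall_catr hOm.
      * have E := hasF_filter Hh. rewrite E cats0 in Hprem'. have := fsplit P Th => hsp.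
        dpm Th Pi (A :: Box Gr b :: L1 ++ L2). apply: weakR.
        dpm (filter (predC P) Th ++ filter P Th) Pi (Box Gr b :: L1 ++ L2).
        apply: d_DK => //.
        -- exact: Forall_filter.
        -- exact: Forall_filterC.
        -- exact: Forall_catr hOm.
  -
    move=> S G D Gr a0 Hd1 IH1 Th Pi La Hc h1 h2 h3.
    case: (locate h2) => [[P1 [P2 [EP hY]]]|[G1 [G2 [EG hY]]]].
    + subst Pi. case: (ctx_rmPi Hc) => fB Hc'. have fa0 := free_Box fB.
      dpm Th (Box Gr a0 :: P1 ++ P2) (A :: La). apply: d_DT.
      apply: IH1; fin.
    + apply: (HsL EG (ps := [:: ((Gr, a0) :: Sg, a0 :: G1 ++ G2, De)])) => //.
      move=> s /= [<-|[]] /=. dpm ((Gr, a0) :: S) (a0 :: G) D; exact: Hd1.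
Qed.
End Core.


Definition allf (S : seqnt) := map (@boxed Agt) S.1.1 ++ S.1.2 ++ S.2.
Definition goodA (S : seqnt) (A : form) :=
  (forall q, var_occ q A -> q <> p /\ exists f, In f (allf S) /\ var_occ q f) /\
  (forall b, agt_occ b A -> b <> a /\ exists f, In f (allf S) /\ agt_occ b f).
Definition UI (S : seqnt) (A : form) :=
  goodA S A /\ derivable S.1.1 (A :: S.1.2) S.2 /\
  (forall Pi La Th, ctxfree Th Pi La ->
     derivable (Th ++ S.1.1) (Pi ++ S.1.2) (S.2 ++ La) -> derivable Th Pi (A :: La)).
Definition ui (S : seqnt) : form := epsilon (inhabits (Bot Agt)) (UI S).

Definition incl (f g : form) :=
  (forall q, var_occ q f -> var_occ q g) /\ (forall b, agt_occ b f -> agt_occ b g).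
Definition cover (S' S : seqnt) := forall f, In f (allf S') -> exists g, In g (allf S) /\ incl f g.

Lemma good_lift S' S A : goodA S' A -> cover S' S -> goodA S A.
Proof.
  move=> [H1 H2] Hc; split.
  - move=> q /H1 [Hq [f [Hf Hv]]]; split => //. case: (Hc f Hf) => g [Hg [I1 _]]; exists g; auto.
  - move=> b /H2 [Hq [f [Hf Hv]]]; split => //. case: (Hc f Hf) => g [Hg [_ I2]]; exists g; auto.
Qed.

Definition big_or (ds : seq form) := foldr (@Or Agt) (Bot Agt) ds.
Definition big_and (ds : seq form) := foldr (@And Agt) (Neg (Bot Agt)) ds.

Lemma good_or S ds : (forall d, In d ds -> goodA S d) -> goodA S (big_or ds).
Proof.
  elim: ds => [|d ds IH] H; first by split.
  have [H1 H2] := H d (or_introl erefl).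
  have [H3 H4] := IH (fun d' Hd => H d' (or_intror Hd)).
  split => /= [q [/H1|/H3]|b [/H2|/H4]] //.
Qed.
Lemma good_and S ds : (forall d, In d ds -> goodA S d) -> goodA S (big_and ds).
Proof.
  elim: ds => [|d ds IH] H; first by split.
  have [H1 H2] := H d (or_introl erefl).
  have [H3 H4] := IH (fun d' Hd => H d' (or_intror Hd)).
  split => /= [q [/H1|/H3]|b [/H2|/H4]] //.
Qed.

Lemma or_intro ds d Th Pi La : In d ds -> derivable Th Pi (d :: La) -> derivable Th Pi (big_or ds :: La).
Proof.
  elim: ds => [|d0 ds IH] //= Hin Hd. apply: d_Ror.
  case: Hin => [E|Hin].
  - subst d0. dpm Th Pi (big_or ds :: d :: La). exact: weakR.
  - dpm Th Pi (d0 :: big_or ds :: La). apply: weakR. exact: IH.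
Qed.
Lemma or_elim ds S G D : (forall d, In d ds -> derivable S (d :: G) D) -> derivable S (big_or ds :: G) D.
Proof.
  elim: ds => [|d0 ds IH] /= H; first exact: d_bot.
  apply: d_Lor; [apply: H; by left | apply: IH => d Hd; apply: H; by right].
Qed.
Lemma and_intro ds Th Pi La : (forall d, In d ds -> derivable Th Pi (d :: La)) -> derivable Th Pi (big_and ds :: La).
Proof.
  elim: ds => [|d0 ds IH] /= H; first by apply: d_Rneg; exact: d_bot.
  apply: d_Rand; [apply: H; by left | apply: IH => d Hd; apply: H; by right].
Qed.
Lemma and_elim ds S G D : derivable S (ds ++ G) D -> derivable S (big_and ds :: G) D.
Proof.
  elim: ds G => [|d0 ds IH] G /= H; first exact: weakL.
  apply: d_Land. dpm S (big_and ds :: d0 :: G) D. apply: IH. dpm S (d0 :: ds ++ G) D. exact: H.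
Qed.

Lemma lsound Sg x G D ps E : lprems Sg x G D = Some ps ->
  (forall s, In s ps -> derivable s.1.1 (E ++ s.1.2) s.2) -> derivable Sg (E ++ x :: G) D.
Proof.
  case: x => //= [y z|y z|y z|y|Gr y] [<-] H.
  - dpm Sg (And y z :: E ++ G) D. apply: d_Land. dpm Sg (E ++ y :: z :: G) D. exact: (H _ (or_introl erefl)).
  - dpm Sg (Or y z :: E ++ G) D. apply: d_Lor.
    + dpm Sg (E ++ y :: G) D. exact: (H _ (or_introl erefl)).
    + dpm Sg (E ++ z :: G) D. exact: (H _ (or_intror (or_introl erefl))).
  - dpm Sg (Imp y z :: E ++ G) D. apply: d_Limp.
    + exact: (H _ (or_introl erefl)).
    + dpm Sg (E ++ z :: G) D. exact: (H _ (or_intror (or_introl erefl))).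
  - dpm Sg (Neg y :: E ++ G) D. apply: d_Lneg. exact: (H _ (or_introl erefl)).
  - dpm Sg (Box Gr y :: E ++ G) D. apply: d_DT. dpm ((Gr, y) :: Sg) (E ++ y :: G) D. exact: (H _ (or_introl erefl)).
Qed.

Lemma rsound Sg G x D ps E : rprems Sg G x D = Some ps ->
  (forall s, In s ps -> derivable s.1.1 (E ++ s.1.2) s.2) -> derivable Sg (E ++ G) (x :: D).
Proof.
  case: x => //= [y z|y z|y z|y] [<-] H.
  - apply: d_Rand; [exact: (H _ (or_introl erefl))|exact: (H _ (or_intror (or_introl erefl)))].
  - apply: d_Ror. exact: (H _ (or_introl erefl)).
  - apply: d_Rimp. dpm Sg (E ++ y :: G) (z :: D). exact: (H _ (or_introl erefl)).
  - apply: d_Rneg. dpm Sg (E ++ y :: G) D. exact: (H _ (or_introl erefl)).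
Qed.

Fixpoint md (f : form) : nat :=
  match f with
  | Var _ | Bot => 0
  | And x y | Or x y | Imp x y => maxn (md x) (md y)
  | Neg x => md x
  | Box _ x => (md x).+1
  end.
Definition dl (l : seq form) := foldr (fun f m => maxn (md f) m) 0 l.
Lemma dl_cat l1 l2 : dl (l1 ++ l2) = maxn (dl l1) (dl l2).
Proof. elim: l1 => [|x l IH] /=; [by rewrite max0n|rewrite IH; lia]. Qed.
Lemma md_le_dl f l : In f l -> md f <= dl l.
Proof. elim: l => [|x l IH] //= [<-|/IH]; lia. Qed.
Lemma dl_lt l k : (forall f, In f l -> md f < k) -> 0 < k -> dl l < k.
Proof. elim: l => [|x l IH] //= H Hk. have := H x (or_introl erefl). have := IH (fun f Hf => H f (or_intror Hf)) Hk. lia. Qed.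

Definition dS (S : seqnt) := maxn (dl (map (@boxed Agt) S.1.1)) (maxn (dl S.1.2) (dl S.2)).
Definition sS (S : seqnt) := sl S.1.2 + sl S.2.
Definition ltS (S' S : seqnt) := dS S' < dS S \/ (dS S' <= dS S /\ sS S' < sS S).

Lemma lprems_lt Sg G1 x G2 De ps s : lprems Sg x (G1 ++ G2) De = Some ps -> In s ps ->
  ltS s (Sg, G1 ++ x :: G2, De).
Proof.
  rewrite /ltS /dS /sS /=.
  case: x => //= [y z|y z|y z|y|Gr y] [<-] /=; move=> H; repeat (case: H => H); subst s => /=;
  rewrite !dl_cat /=; right; split; try lia; slsimp => /=; lia.
Qed.

Lemma rprems_lt Sg Ga D1 x D2 ps s : rprems Sg Ga x (D1 ++ D2) = Some ps -> In s ps ->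
  ltS s (Sg, Ga, D1 ++ x :: D2).
Proof.
  rewrite /ltS /dS /sS /=.
  case: x => //= [y z|y z|y z|y] [<-] /=; move=> H; repeat (case: H => H); subst s => /=;
  rewrite !dl_cat /=; right; split; try lia; slsimp => /=; lia.
Qed.


Fixpoint splits (l : seq form) : seq (seq form * form * seq form) :=
  match l with
  | [::] => [::]
  | x :: l' => ([::], x, l') :: map (fun t => (x :: t.1.1, t.1.2, t.2)) (splits l')
  end.
Lemma splits_in l1 x l2 : In (l1, x, l2) (splits (l1 ++ x :: l2)).
Proof.
  elim: l1 => [|y l1 IH] /=; first by left.
  right. apply/In_map. by exists (l1, x, l2).
Qed.
Lemma in_splits l t : In t (splits l) -> l = t.1.1 ++ t.1.2 :: t.2.
Proof.
  elim: l t => [|y l IH] t //= [<-|] //.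
  move/In_map => [t' [<- Ht']] /=. by rewrite (IH _ Ht').
Qed.

Lemma hasP' T (P : pred T) l : has P l -> exists x, In x l /\ P x.
Proof. elim: l => [|y l IH] //= /orP [H|/IH [x [H1 H2]]]; [exists y; tauto|exists x; tauto]. Qed.

Lemma In_pmap T U (f : T -> option U) y l : In y (pmap f l) <-> exists x, In x l /\ f x = Some y.
Proof.
  elim: l => [|x l IH] /=; first by split => // -[? []].
  case E: (f x) => [z|] /=; rewrite IH; split.
  - case=> [<-|[x' [H1 H2]]]; [exists x; tauto| exists x'; tauto].
  - case=> x' [[<-|H1] H2]; [left; congruence| right; exists x'; tauto].
  - case=> x' [H1 H2]; exists x'; tauto.
  - case=> x' [[<-|H1] H2]; [congruence| exists x'; tauto].
Qed.

Lemma incl_refl f : incl f f.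
Proof. by split. Qed.

Lemma cover_sub s S x : In x (allf S) ->
  (forall f, In f (allf s) -> In f (allf S) \/ incl f x) -> cover s S.
Proof.
  move=> Hx H f /H [Hf|Hi]; [exists f; split => //; exact: incl_refl|by exists x].
Qed.

Lemma In_allf Sg Ga De f : In f (allf (Sg, Ga, De)) <->
  (exists t, In t Sg /\ boxed t = f) \/ In f Ga \/ In f De.
Proof.
  rewrite /allf /= !In_cat In_map; split; case=> [[t [? ?]]|[?|?]]; try tauto; left; by exists t.
Qed.

Lemma cover_lprems Sg G1 x G2 De ps s : lprems Sg x (G1 ++ G2) De = Some ps -> In s ps ->
  cover s (Sg, G1 ++ x :: G2, De).
Proof.
  move=> Hp Hs. apply: (cover_sub (x := x)).
  { apply/In_allf; right; left; rewrite In_cat /=; tauto. }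
  move=> f. rewrite !In_allf !In_cat /=.
  case: x Hp => //= [y z|y z|y z|y|Gr y] [E]; subst ps;
    repeat (case: Hs => Hs); subst s; rewrite /= ?In_cat.
  all: try done.
  all: rewrite /incl /=.
  all: case=> [[t [Ht <-]]|H].
  all: try (case: Ht => [<-|Ht]; [right; simpl; split => ? ?; tauto|left; left; by exists t]).
  all: try (left; left; by exists t).
  all: repeat (case: H => H); subst; first [ (left; tauto) | (right; split => ? ?; tauto) ].
Qed.


Lemma cover_rprems Sg Ga D1 x D2 ps s : rprems Sg Ga x (D1 ++ D2) = Some ps -> In s ps ->
  cover s (Sg, Ga, D1 ++ x :: D2).
Proof.
  move=> Hp Hs. apply: (cover_sub (x := x)).
  { apply/In_allf; right; right; rewrite In_cat /=; tauto. }
  move=> f. rewrite !In_allf !In_cat /=.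
  case: x Hp => //= [y z|y z|y z|y] [E]; subst ps;
    repeat (case: Hs => Hs); subst s; rewrite /= ?In_cat.
  all: try done.
  all: rewrite /incl /=.
  all: case=> [[t [Ht <-]]|H].
  all: try (left; left; by exists t).
  all: repeat (case: H => H); subst; first [ (left; tauto) | (right; split => ? ?; tauto) ].
Qed.

Lemma cover_star (P : pred pf) Sg Ga De Lb : (forall f, In f Lb -> exists g, In g (allf (Sg, Ga, De)) /\ incl f g) ->
  cover ([::], map snd (filter P Sg), Lb) (Sg, Ga, De).
Proof.
  move=> HL f. rewrite /allf /= In_cat => -[|Hf]; last exact: HL.
  move/In_map => [t [<- /In_filter [Ht _]]].
  exists (boxed t); split; first by apply/In_allf; left; exists t.
  by split => ? /=; tauto.
Qed.

Lemma lt_star (P : pred pf) Sg Ga De : has P Sg -> ltS ([::], map snd (filter P Sg), [::]) (Sg, Ga, De).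
Proof.
  move/hasP' => [t [Ht _]].
  left. rewrite /dS /=.
  have H1 : md (boxed t) <= dl (map (@boxed Agt) Sg) by apply: md_le_dl; apply/In_map; exists t.
  have H2 : dl (map snd (filter P Sg)) < maxn (dl (map (@boxed Agt) Sg)) (maxn (dl Ga) (dl De)).
  { apply: dl_lt; last by move: H1 => /=; lia.
    move=> f /In_map [u [<- /In_filter [Hu _]]].
    have : md (boxed u) <= dl (map (@boxed Agt) Sg) by apply: md_le_dl; apply/In_map; exists u.
    rewrite /=; lia. }
  lia.
Qed.

Lemma lt_star2 (P : pred pf) Sg Ga De Gr b : In (Box Gr b) De ->
  ltS ([::], map snd (filter P Sg), [:: b]) (Sg, Ga, De).
Proof.
  move=> Hb. left. rewrite /dS /=.
  have H1 := md_le_dl Hb. rewrite /= in H1.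
  have H2 : dl (map snd (filter P Sg)) < maxn (dl (map (@boxed Agt) Sg)) (maxn (dl Ga) (dl De)).
  { apply: dl_lt; last by lia.
    move=> f /In_map [u [<- /In_filter [Hu _]]].
    have : md (boxed u) <= dl (map (@boxed Agt) Sg) by apply: md_le_dl; apply/In_map; exists u.
    rewrite /=; lia. }
  lia.
Qed.


Definition atR (De : seq form) : seq form :=
  pmap (fun f => match f with Var q => if q == p then None else Some (Var _ q) | _ => None end) De.
Definition atL (Ga : seq form) : seq form :=
  pmap (fun f => match f with Var q => if q == p then None else Some (Neg (Var _ q)) | _ => None end) Ga.
Definition stepL Sg Ga De : seq form :=
  pmap (fun t => omap (fun ps => big_and (map ui ps)) (lprems Sg t.1.2 (t.1.1 ++ t.2) De)) (splits Ga).
Definition stepR Sg Ga De : seq form :=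
  pmap (fun t => omap (fun ps => big_and (map ui ps)) (rprems Sg Ga t.1.2 (t.1.1 ++ t.2))) (splits De).

Lemma atR_in De q : In (Var _ q) De -> q <> p -> In (Var _ q) (atR De).
Proof. move=> H Hq; apply/In_pmap; exists (Var _ q); split => //=. by case: eqP. Qed.
Lemma atL_in Ga q : In (Var _ q) Ga -> q <> p -> In (Neg (Var _ q)) (atL Ga).
Proof. move=> H Hq; apply/In_pmap; exists (Var _ q); split => //=. by case: eqP. Qed.

Lemma atR_ok Sg Ga De d : In d (atR De) -> goodA (Sg, Ga, De) d /\ derivable Sg (d :: Ga) De.
Proof.
  move/In_pmap => [f [Hf]]. case: f Hf => // q Hf. case: eqP => // Hq [<-]. split.
  - split => //= r Er; subst r; split => //; exists (Var _ q); split => //.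
    apply/In_allf; tauto.
  - case: (In_split' Hf) => D1 [D2 ->]. dpm Sg (Var _ q :: Ga) (Var _ q :: D1 ++ D2). exact: d_id.
Qed.
Lemma atL_ok Sg Ga De d : In d (atL Ga) -> goodA (Sg, Ga, De) d /\ derivable Sg (d :: Ga) De.
Proof.
  move/In_pmap => [f [Hf]]. case: f Hf => // q Hf. case: eqP => // Hq [<-]. split.
  - split => //= r Er; subst r; split => //; exists (Var _ q); split => //.
    apply/In_allf; tauto.
  - apply: d_Lneg. case: (In_split' Hf) => G1 [G2 E]; rewrite E.
    dpm Sg (Var _ q :: G1 ++ G2) (Var _ q :: De). exact: d_id.
Qed.

Lemma stepL_in Sg G1 x G2 De ps : lprems Sg x (G1 ++ G2) De = Some ps ->
  In (big_and (map ui ps)) (stepL Sg (G1 ++ x :: G2) De).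
Proof. move=> H; apply/In_pmap; exists (G1, x, G2); split; [exact: splits_in|by rewrite /= H]. Qed.
Lemma stepR_in Sg Ga D1 x D2 ps : rprems Sg Ga x (D1 ++ D2) = Some ps ->
  In (big_and (map ui ps)) (stepR Sg Ga (D1 ++ x :: D2)).
Proof. move=> H; apply/In_pmap; exists (D1, x, D2); split; [exact: splits_in|by rewrite /= H]. Qed.

Lemma weak_in_map (ps : seq seqnt) s : In s ps -> derivable s.1.1 (ui s :: s.1.2) s.2 ->
  derivable s.1.1 (map ui ps ++ s.1.2) s.2.
Proof.
  move=> Hs H. have Hi : In (ui s) (map ui ps) by apply/In_map; exists s.
  case: (In_split' Hi) => E1 [E2 E]; rewrite E. dpm s.1.1 ((E1 ++ E2) ++ ui s :: s.1.2) s.2. exact: weakLs.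
Qed.

Lemma stepL_ok Sg Ga De d : (forall S', ltS S' (Sg, Ga, De) -> UI S' (ui S')) ->
  In d (stepL Sg Ga De) -> goodA (Sg, Ga, De) d /\ derivable Sg (d :: Ga) De.
Proof.
  move=> IHS /In_pmap [[[G1 x] G2] [/in_splits /= EG]].
  case E: (lprems Sg x (G1 ++ G2) De) => [ps|] //= [<-]. subst Ga.
  have U s : In s ps -> UI s (ui s) by move=> Hs; apply: IHS; exact: lprems_lt E Hs.
  split.
  - apply: good_and => d' /In_map [s [<- Hs]]. apply: good_lift (U s Hs).1 _. exact: cover_lprems E Hs.
  - apply: and_elim. dpm Sg (map ui ps ++ x :: G1 ++ G2) De. apply: (lsound E) => s Hs.
    apply: weak_in_map => //. exact: (U s Hs).2.1.
Qed.

Lemma stepR_ok Sg Ga De d : (forall S', ltS S' (Sg, Ga, De) -> UI S' (ui S')) ->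
  In d (stepR Sg Ga De) -> goodA (Sg, Ga, De) d /\ derivable Sg (d :: Ga) De.
Proof.
  move=> IHS /In_pmap [[[D1 x] D2] [/in_splits /= ED]].
  case E: (rprems Sg Ga x (D1 ++ D2)) => [ps|] //= [<-]. subst De.
  have U s : In s ps -> UI s (ui s) by move=> Hs; apply: IHS; exact: rprems_lt E Hs.
  split.
  - apply: good_and => d' /In_map [s [<- Hs]]. apply: good_lift (U s Hs).1 _. exact: cover_rprems E Hs.
  - apply: and_elim. dpm Sg (map ui ps ++ Ga) (x :: D1 ++ D2). apply: (rsound E) => s Hs.
    apply: weak_in_map => //. exact: (U s Hs).2.1.
Qed.


Definition UnG (l : seq pf) : {set Agt} := \bigcup_(t <- l) sval t.1.

Lemma in_UnG x (l : seq pf) : x \in UnG l -> exists t, In t l /\ x \in sval t.1.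
Proof.
  rewrite /UnG; elim: l => [|t l IH]; first by rewrite big_nil inE.
  rewrite big_cons inE => /orP [H|/IH [u [H1 H2]]]; [exists t; split => //; by left|exists u; split => //; by right].
Qed.
Lemma sub_UnG (t : pf) (l : seq pf) : In t l -> sval t.1 \subset UnG l.
Proof.
  rewrite /UnG; elim: l => [|u l IH] //= [<-|/IH H]; rewrite big_cons.
  - exact: subsetUl.
  - exact: subset_trans H (subsetUr _ _).
Qed.
Lemma UnG_sub (l : seq pf) (X : {set Agt}) : (forall t, In t l -> sval t.1 \subset X) -> UnG l \subset X.
Proof.
  rewrite /UnG; elim: l => [|u l IH] H; first by rewrite big_nil sub0set.
  rewrite big_cons subUset (H u (or_introl erefl)) /=. apply: IH => t Ht; apply: H; by right.
Qed.

Lemma inIn (T : eqType) (x : T) s : x \in s -> In x s.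
Proof. elim: s => [|y s IH] //; rewrite in_cons => /orP [/eqP ->|/IH H]; [by left|by right]. Qed.
Lemma hasI T (P : pred T) x l : In x l -> P x -> has P l.
Proof. elim: l => [|y l IH] //= [<- ->|/IH H /H ->] //; by rewrite orbT. Qed.

Lemma grp_ne (G : grp) : sval G != set0.
Proof. exact: (svalP G). Qed.

Definition dis1 Sg (H0 : {set Agt}) : option form :=
  if (a \notin H0) && has (fun t : pf => sval t.1 \subset H0) Sg && (H0 \subset UnG Sg) then
    omap (fun G : grp => Neg (Box G (Neg (ui ([::], map snd (filter (PG G) Sg), [::]))))) (insub H0)
  else None.
Definition modal1 Sg : seq form := pmap (dis1 Sg) (enum (@predT {set Agt})).
Definition dis2 Sg (f : form) : option form :=
  match f with
  | Box Gr b => omap (fun G' : grp => Box G' (ui ([::], map snd (filter (PG Gr) Sg), [:: b]))) (insub (sval Gr :\ a))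
  | _ => None
  end.
Definition modal2 Sg De : seq form := pmap (dis2 Sg) De.

Lemma modal1_in Sg (Gr : grp) : a \notin sval Gr -> has (PG Gr) Sg ->
  exists G : grp, In (Neg (Box G (Neg (ui ([::], map snd (filter (PG G) Sg), [::]))))) (modal1 Sg) /\
    sval G \subset sval Gr /\ filter (PG G) Sg = filter (PG Gr) Sg.
Proof.
  move=> HaGr Hhas. set H0 := UnG (filter (PG Gr) Sg).
  have [t [Ht HtG]] := hasP' Hhas.
  have Htf : In t (filter (PG Gr) Sg) by apply/In_filter.
  have HH0 : H0 != set0.
  { case/set0Pn: (grp_ne t.1) => x Hx. apply/set0Pn; exists x.
    exact: (subsetP (sub_UnG Htf)). }
  have [G EG HGv] : exists2 G : grp, (insub H0 : option grp) = Some G & sval G = H0.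
  { case: insubP => [G _ E|/negP//]; by exists G. }
  have HGsub : sval G \subset sval Gr by rewrite HGv; apply: UnG_sub => u /In_filter [_ ?].
  have Hfeq : filter (PG G) Sg = filter (PG Gr) Sg.
  { apply: eq_in_filter' => u Hu /=. apply/idP/idP => H.
    - exact: subset_trans H HGsub.
    - rewrite HGv; apply: sub_UnG; exact/In_filter. }
  exists G; split; last by split.
  apply/In_pmap; exists H0; split; first by apply: inIn; rewrite mem_enum.
  rewrite /dis1.
  have -> : a \notin H0.
  { apply/negP => /in_UnG [u [/In_filter [_ Hu] Hau]]. move/negP: HaGr; apply. exact: (subsetP Hu). }
  have -> : has (fun t : pf => sval t.1 \subset H0) Sg by apply: (hasI Ht); exact: sub_UnG.
  have -> : H0 \subset UnG Sg by apply: UnG_sub => u /In_filter [Hu _]; exact: sub_UnG.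
  by rewrite /= EG.
Qed.

Lemma modal2_in Sg De (Gr : grp) b : In (Box Gr b) De -> (sval Gr :\ a) != set0 ->
  exists G' : grp, In (Box G' (ui ([::], map snd (filter (PG Gr) Sg), [:: b]))) (modal2 Sg De) /\
    sval G' = sval Gr :\ a.
Proof.
  move=> Hin Hne.
  have [G EG HGv] : exists2 G : grp, (insub (sval Gr :\ a) : option grp) = Some G & sval G = sval Gr :\ a.
  { case: insubP => [G _ E|/negP//]; by exists G. }
  exists G; split => //. apply/In_pmap; exists (Box Gr b); split => //=. by rewrite EG.
Qed.


Lemma insub_val (H0 : {set Agt}) (G : grp) : (insub H0 : option grp) = Some G -> sval G = H0.
Proof. case: insubP => [G1 _ E [<-]|_] //. Qed.

Lemma Forall_rm T (P : T -> Prop) l1 x l2 : Forall P (l1 ++ x :: l2) -> Forall P (l1 ++ l2).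
Proof. rewrite !Forall_In => H y; rewrite In_cat => Hy; apply: H; rewrite In_cat /=; tauto. Qed.

Lemma modal1_ok Sg Ga De d : sat Ga De -> (forall S', ltS S' (Sg, Ga, De) -> UI S' (ui S')) ->
  In d (modal1 Sg) -> goodA (Sg, Ga, De) d /\ derivable Sg (d :: Ga) De.
Proof.
  move=> [HGa HDe] IHS /In_pmap [H0 [_]]. rewrite /dis1. case: ifP => // /andP [/andP [HaH Hhas] Hsub].
  case EI: (insub H0 : option grp) => [G|] //= [<-].
  have EG' : sval G = H0 := insub_val EI.
  set S1 := ([::], map snd (filter (PG G) Sg), [::]).
  have U1 : UI S1 (ui S1).
  { apply: IHS; apply: lt_star. by rewrite EG'. }
  have g1 := good_lift U1.1 (@cover_star (PG G) Sg Ga De [::] (fun f (H : In f [::]) => match H with end)).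
  split.
  - split.
    + move=> q /= Hq. exact: g1.1.
    + move=> b /= [Hb|Hb]; last exact: g1.2.
      rewrite EG' in Hb. split.
      * move=> E; subst b. by rewrite Hb in HaH.
      * case: (in_UnG (subsetP Hsub b Hb)) => t [Ht Hbt].
        exists (boxed t); split; first by apply/In_allf; left; exists t.
        by left.
  - apply: d_Lneg. have := fsplit (PG G) Sg => hsp.
    dpm (filter (predC (PG G)) Sg ++ filter (PG G) Sg) Ga (Box G (Neg (ui S1)) :: De).
    apply: d_DK => //.
    + apply: d_Rneg. exact: U1.2.1.
    + exact: Forall_filter.
    + exact: Forall_filterC.
Qed.

Lemma modal2_ok Sg Ga De d : sat Ga De -> (forall S', ltS S' (Sg, Ga, De) -> UI S' (ui S')) ->
  In d (modal2 Sg De) -> goodA (Sg, Ga, De) d /\ derivable Sg (d :: Ga) De.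
Proof.
  move=> [HGa HDe] IHS /In_pmap [f [Hf]]. case: f Hf => // Gr b Hf /=.
  case EI: (insub (sval Gr :\ a) : option grp) => [G'|] //= [<-].
  have EG' : sval G' = sval Gr :\ a := insub_val EI.
  set S2 := ([::], map snd (filter (PG Gr) Sg), [:: b]).
  have U2 : UI S2 (ui S2) by apply: IHS; exact: lt_star2 Hf.
  have Hcov : forall f, In f [:: b] -> exists g, In g (allf (Sg, Ga, De)) /\ incl f g.
  { move=> f /= [<-|[]]. exists (Box Gr b); split; first by apply/In_allf; tauto.
    split => ? /=; tauto. }
  have g2 := good_lift U2.1 (@cover_star (PG Gr) Sg Ga De [:: b] Hcov).
  split.
  - split.
    + move=> q /= Hq. exact: g2.1.
    + move=> b0 /= [Hb|Hb]; last exact: g2.2.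
      rewrite EG' in_setD1 in Hb. case/andP: Hb => /eqP Hba Hb. split => //.
      exists (Box Gr b); split; first by apply/In_allf; tauto. by left.
  - apply: d_DT. apply: weakL.
    case: (In_split' Hf) => D1 [D2 ED].
    have := fsplit (PG Gr) Sg => hsp.
    rewrite ED. dpm (filter (predC (PG Gr)) Sg ++ ((G', ui S2) :: filter (PG Gr) Sg)) Ga (Box Gr b :: D1 ++ D2).
    apply: d_DK => //.
    + exact: U2.2.1.
    + constructor; first by rewrite /= EG' subD1set.
      exact: Forall_filter.
    + exact: Forall_filterC.
    + rewrite ED in HDe. exact: Forall_rm HDe.
Qed.

Lemma HM1_ok Sg Ga De ds : (forall d, In d (modal1 Sg) -> In d ds) ->
  (forall S', ltS S' (Sg, Ga, De) -> UI S' (ui S')) ->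
  sat Ga De -> forall (Gr : grp) b Th Pi La0, a \notin sval Gr ->
  has (PG Gr) Sg -> ctxfree Th Pi (Box Gr b :: La0) ->
  Forall (@atom_or_bot Agt) Pi -> Forall (@atom_bot_or_boxed Agt) La0 ->
  derivable [::] (map snd (filter (PG Gr) Th) ++ map snd (filter (PG Gr) Sg)) [:: b] ->
  derivable Th Pi (big_or ds :: Box Gr b :: La0).
Proof.
  move=> Hsub IHS Hsat Gr b Th Pi La0 HaGr Hhas Hc HPi HLa Hprem.
  case: (modal1_in HaGr Hhas) => G [Hin [HGGr Hfeq]].
  pose S1 : seqnt := ([::], map snd (filter (PG G) Sg), [::]).
  have U1 : UI S1 (ui S1).
  { apply: IHS; apply: lt_star. case: (hasP' Hhas) => t [Ht Ht'].
    have : In t (filter (PG G) Sg) by rewrite Hfeq; apply/In_filter.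
    case/In_filter => H1 H2. exact: hasI H1 H2. }
  apply: (or_intro (Hsub _ Hin)).
  have HB : derivable [::] (map snd (filter (PG Gr) Th)) [:: ui S1; b].
  { apply: (U1.2.2 (map snd (filter (PG Gr) Th)) [:: b] [::]).
    - apply: ctx_intro => //.
      + move=> f /In_map [t [<- /In_filter [Ht _]]]. exact: free_Box (ctx_Th Hc Ht).
      + move=> f /= [<-|[]]. apply: (@free_Box Gr). apply: (ctx_La Hc). by left.
    - rewrite /= Hfeq. exact: Hprem. }
  apply: d_Rneg. apply: d_DT. apply: weakL.
  have := fsplit (PG Gr) Th => hsp.
  dpm (filter (predC (PG Gr)) Th ++ ((G, Neg (ui ([::], map snd (filter (PG G) Sg), [::]))) :: filter (PG Gr) Th)) Pi (Box Gr b :: La0).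
  apply: d_DK => //.
  - rewrite /=. apply: d_Lneg. exact: HB.
  - constructor; [exact: HGGr|exact: Forall_filter].
  - exact: Forall_filterC.
Qed.

Lemma HM2_ok Sg Ga De ds : (forall d, In d (modal2 Sg De) -> In d ds) ->
  (forall S', ltS S' (Sg, Ga, De) -> UI S' (ui S')) ->
  sat Ga De -> forall (Gr : grp) b Th Pi La, In (Box Gr b) De ->
  ctxfree Th Pi La -> filter (PG Gr) Th <> [::] ->
  Forall (@atom_or_bot Agt) Pi -> Forall (@atom_bot_or_boxed Agt) La ->
  derivable [::] (map snd (filter (PG Gr) Th) ++ map snd (filter (PG Gr) Sg)) [:: b] ->
  derivable Th Pi (big_or ds :: La).
Proof.
  move=> Hsub IHS Hsat Gr b Th Pi La Hin Hc Hne HPi HLa Hprem.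
  have Hfree : forall u, In u Th -> a \notin sval u.1.
  { move=> u Hu. apply/negP => Hau. have := ctx_Th Hc Hu. case=> _ H; apply: H; by left. }
  have Hne' : (sval Gr :\ a) != set0.
  { case E: (filter (PG Gr) Th) Hne => [|t l] // _.
    have : In t (filter (PG Gr) Th) by rewrite E; left.
    case/In_filter => Ht HtG.
    case/set0Pn: (grp_ne t.1) => x Hx. apply/set0Pn; exists x.
    rewrite in_setD1 (subsetP HtG x Hx) andbT. apply/eqP => Exa; subst x.
    by move: (Hfree t Ht); rewrite Hx. }
  case: (modal2_in Sg Hin Hne') => G' [Hin' EG'].
  apply: (or_intro (Hsub _ Hin')).
  have Hfeq : filter (PG G') Th = filter (PG Gr) Th.
  { apply: eq_in_filter' => u Hu /=. by rewrite EG' subsetD1 (Hfree u Hu) andbT. }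
  pose S2 : seqnt := ([::], map snd (filter (PG Gr) Sg), [:: b]).
  have U2 : UI S2 (ui S2) by apply: IHS; exact: lt_star2 Hin.
  have HC : derivable [::] (map snd (filter (PG Gr) Th)) [:: ui S2].
  { apply: (U2.2.2 (map snd (filter (PG Gr) Th)) [::] [::]).
    - apply: ctx_intro => //.
      move=> f /In_map [t [<- /In_filter [Ht _]]]. exact: free_Box (ctx_Th Hc Ht).
    - exact: Hprem. }
  have := fsplit (PG G') Th => hsp.
  dpm (filter (predC (PG G')) Th ++ filter (PG G') Th) Pi (Box G' (ui ([::], map snd (filter (PG Gr) Sg), [:: b])) :: La).
  apply: d_DK => //.
  - rewrite Hfeq. exact: HC.
  - exact: Forall_filter.
  - exact: Forall_filterC.
Qed.


Lemma step S : (forall S', ltS S' S -> UI S' (ui S')) -> exists A, UI S A.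
Proof.
  case: S => [[Sg Ga] De] IHS.
  case: (classic (derivable Sg Ga De)) => Hd.
  { exists (Neg (Bot Agt)). split; [by split|split].
    - rewrite /=. apply: d_Lneg. exact: weakR.
    - move=> Pi La Th _ _ /=. apply: d_Rneg. exact: d_bot. }
  pose base := atR De ++ atL Ga ++ stepL Sg Ga De ++ stepR Sg Ga De.
  have Hbase : forall d, In d base -> goodA (Sg, Ga, De) d /\ derivable Sg (d :: Ga) De.
  { move=> d; rewrite /base !In_cat => -[H|[H|[H|H]]].
    - exact: atR_ok H.
    - exact: atL_ok H.
    - exact: stepL_ok IHS H.
    - exact: stepR_ok IHS H. }
  have gen : forall extra, (forall d, In d extra -> goodA (Sg, Ga, De) d /\ derivable Sg (d :: Ga) De) ->
    (sat Ga De -> forall (Gr : grp) b Th Pi La0, a \notin sval Gr ->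
      has (PG Gr) Sg -> ctxfree Th Pi (Box Gr b :: La0) ->
      Forall (@atom_or_bot Agt) Pi -> Forall (@atom_bot_or_boxed Agt) La0 ->
      derivable [::] (map snd (filter (PG Gr) Th) ++ map snd (filter (PG Gr) Sg)) [:: b] ->
      derivable Th Pi (big_or (base ++ extra) :: Box Gr b :: La0)) ->
    (sat Ga De -> forall (Gr : grp) b Th Pi La, In (Box Gr b) De ->
      ctxfree Th Pi La -> filter (PG Gr) Th <> [::] ->
      Forall (@atom_or_bot Agt) Pi -> Forall (@atom_bot_or_boxed Agt) La ->
      derivable [::] (map snd (filter (PG Gr) Th) ++ map snd (filter (PG Gr) Sg)) [:: b] ->
      derivable Th Pi (big_or (base ++ extra) :: La)) ->
    UI (Sg, Ga, De) (big_or (base ++ extra)).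
  { move=> extra Hex HM1 HM2.
    have Hall : forall d, In d (base ++ extra) -> goodA (Sg, Ga, De) d /\ derivable Sg (d :: Ga) De.
    { move=> d; rewrite In_cat => -[/Hbase|/Hex] //. }
    split; [|split].
    - apply: good_or => d /Hall [] //.
    - apply: or_elim => d /Hall [] //.
    - move=> Pi La Th Hc Hder /=.
      apply: (@core Sg Ga De (big_or (base ++ extra)) Hd _ _ _ _ HM1 HM2 _ _ _ Hder Th Pi La Hc);
        try exact: Permutation_refl.
      + move=> q Hq Hqp Th' Pi' La' H. apply: (or_intro _ H).
        rewrite /base !In_cat; left; left. exact: atR_in.
      + move=> q Hq Hqp Th' Pi' La' H. apply: (or_intro _ H).
        rewrite /base !In_cat; left; right; left. exact: atL_in.
      + move=> G1 x G2 ps EG Eps Th' Pi' La' Hc' Hders.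
        apply: (or_intro (d := big_and (map ui ps))).
        { rewrite /base !In_cat; left; right; right; left. rewrite EG. exact: stepL_in Eps. }
        apply: and_intro => d' /In_map [s [<- Hs]].
        have U : UI s (ui s) by apply: IHS; rewrite EG; exact: lprems_lt Eps Hs.
        exact: U.2.2 Pi' La' Th' Hc' (Hders s Hs).
      + move=> D1 x D2 ps ED Eps Th' Pi' La' Hc' Hders.
        apply: (or_intro (d := big_and (map ui ps))).
        { rewrite /base !In_cat; left; right; right; right. rewrite ED. exact: stepR_in Eps. }
        apply: and_intro => d' /In_map [s [<- Hs]].
        have U : UI s (ui s) by apply: IHS; rewrite ED; exact: rprems_lt Eps Hs.
        exact: U.2.2 Pi' La' Th' Hc' (Hders s Hs). }
  case: (classic (sat Ga De)) => Hsat.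
  - exists (big_or (base ++ (modal1 Sg ++ modal2 Sg De))). apply: gen.
    + move=> d; rewrite In_cat => -[H|H].
      * exact: modal1_ok Hsat IHS H.
      * exact: modal2_ok Hsat IHS H.
    + apply: HM1_ok => // d Hd'. rewrite !In_cat; tauto.
    + apply: HM2_ok => // d Hd'. rewrite !In_cat; tauto.
  - exists (big_or (base ++ [::])). apply: gen => //.
Qed.

Lemma main d : forall n S, dS S < d -> sS S < n -> UI S (ui S).
Proof.
  elim: d => [|d IHd]; first by move=> n S; lia.
  elim => [|n IHn] S Hd Hn; first lia.
  rewrite /ui; apply: epsilon_spec. apply: step => S' [Hlt|[Hle Hlt]].
  - apply: (IHd (sS S').+1) => //; lia.
  - apply: IHn => //; lia.
Qed.

Lemma UI_all S : UI S (ui S).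
Proof. exact: (main (d := (dS S).+1) (n := (sS S).+1)). Qed.

Lemma toGamma (Th S : seq pf) G D :
  derivable (Th ++ S) G D -> derivable S (map (@boxed Agt) Th ++ G) D.
Proof.
  elim: Th S G => [|t Th IH] S G H //=.
  case: t H => [G0 x] H /=. apply: d_DT.
  have H1 : derivable (Th ++ (G0, x) :: S) (x :: G) D.
  { apply: (d_perm _ _ _ (weakL x H)); pr. }
  apply: (d_perm _ _ _ (IH _ _ H1)); pr.
Qed.

End UI.

Theorem theorem6p18 (Agt : finType) (Hne : 0 < #|Agt|)
    (Sigma : seq (grp Agt * form Agt)) (Gamma Delta : seq (form Agt))
    (p : nat) (a : Agt) :
  exists A : form Agt,
    (forall q, var_occ q A ->
       q <> p /\ exists f, In f (map (@boxed Agt) Sigma ++ Gamma ++ Delta) /\ var_occ q f) /\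
    (forall b, agt_occ b A ->
       b <> a /\ exists f, In f (map (@boxed Agt) Sigma ++ Gamma ++ Delta) /\ agt_occ b f) /\
    derivable Sigma (A :: Gamma) Delta /\
    (forall (Pi Lambda : seq (form Agt)) (Theta : seq (grp Agt * form Agt)),
       (forall f, In f (map (@boxed Agt) Theta ++ Pi ++ Lambda) ->
          ~ var_occ p f /\ ~ agt_occ a f) ->
       derivable (Theta ++ Sigma) (Pi ++ Gamma) (Delta ++ Lambda) ->
       derivable [::] (map (@boxed Agt) Theta ++ Pi) (A :: Lambda)).
Proof.
  have [[G1 G2] [D H]] := UI_all p a (Sigma, Gamma, Delta).
  exists (ui p a (Sigma, Gamma, Delta)).
  split; first exact: G1. split; first exact: G2. split; first exact: D.
  move=> Pi La Th Hc Hd. apply: toGamma. rewrite cats0. exact: H Pi La Th Hc Hd.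
Qed.
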